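(* Let $\Delta\ge 1$ and $0\le\lambda<1$. Let $T$ be a rooted tree with $n$ vertices and $\Delta(T)\le\Delta$. Then there is a subtree $Q$ of $T$ containing the root with $|Q|\in[(1-2\lambda)n,\,(1-\lambda)n+2\Delta]$ such that $T\setminus Q$ has at most $\Delta$ connected components, each of order at most $\lambda n$.
   Context: For graphs $T\supseteq Q$, $T\setminus Q$ denotes the graph with edge set $E(T)\setminus E(Q)$ and isolated vertices deleted. $|Q|$ is the number of vertices of $Q$; $\Delta(T)$ is the maximum degree. *)

(* Defs.v *)
From mathcomp Require Import all_boot all_order all_algebra.
From mathcomp Require Export reals.
Set Implicit Arguments. Unset Strict Implicit. Unset Printing Implicit Defensive.

Definition simple_graph (V : finType) (adj : rel V) : Prop :=
  symmetric adj /\ irreflexive adj.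

Definition acyclic (V : finType) (adj : rel V) : Prop :=
  forall (x : V) (p : seq V),
    path adj x p -> uniq (x :: p) -> 2 <= size p -> ~~ adj (last x p) x.

Definition is_tree (V : finType) (adj : rel V) : Prop :=
  simple_graph adj /\ (0 < #|V|) /\ (forall x y : V, connect adj x y) /\ acyclic adj.

Definition maxdeg_le (V : finType) (adj : rel V) (D : nat) : Prop :=
  forall x : V, #|[set y | adj x y]| <= D.

Definition induced (V : finType) (adj : rel V) (S : {set V}) : rel V :=
  [rel x y | [&& adj x y, x \in S & y \in S]].

(* S spans a subtree of T: S nonempty and T[S] connected.
   (A subgraph of a tree that is a tree on vertex set S is exactly T[S].) *)
Definition subtree_set (V : finType) (adj : rel V) (S : {set V}) : Prop :=
  S != set0 /\ {in S &, forall x y, connect (induced adj S) x y}.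

(* T \ Q : edges of T not in Q = T[S]; vertex set = non-isolated vertices. *)
Definition diff_adj (V : finType) (adj : rel V) (S : {set V}) : rel V :=
  [rel x y | adj x y && ~~ ((x \in S) && (y \in S))].

Definition diff_verts (V : finType) (adj : rel V) (S : {set V}) : {set V} :=
  [set x | [exists y, diff_adj adj S x y]].

Definition diff_comp (V : finType) (adj : rel V) (S : {set V}) (x : V) : {set V} :=
  [set y | connect (diff_adj adj S) x y].

Definition diff_comps (V : finType) (adj : rel V) (S : {set V}) : {set {set V}} :=
  [set diff_comp adj S x | x in diff_verts adj S].

(* Main.v *)
Require Import Defs.
From mathcomp Require Import all_boot all_order all_algebra.
From mathcomp Require Import reals.
Import Order.TTheory GRing.Theory Num.Theory.
Set Implicit Arguments. Unset Strict Implicit. Unset Printing Implicit Defensive.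

Section Gen.
Variable V : finType.

Lemma connect_closed (e : rel V) (X : pred V) x y :
  connect e x y -> X x -> (forall u w, X u -> e u w -> X w) -> X y.
Proof.
move=> /connectP [p pth ->] Xx cl; elim: p x pth Xx => [|z p IH] x //= /andP [exz pth] Xx.
exact: IH pth (cl _ _ Xx exz).
Qed.

Lemma exit (e : rel V) (P : {set V}) x y :
  connect e x y -> x \in P -> y \notin P ->
  exists a b, [/\ connect (induced e P) x a, a \in P, b \notin P & e a b].
Proof.
move=> /connectP [p pth ->]; elim: p x pth => [|z p IH] x /=.
  by move=> _ xP; rewrite xP.
move=> /andP [exz pth] xP lP.
case zP: (z \in P).
  have [a [b [ca aP bP eab]]] := IH z pth zP lP.
  exists a, b; split=> //; apply: connect_trans ca; apply: connect1.
  by rewrite /induced /= exz xP zP.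
by exists x, z; split=> //; rewrite ?zP.
Qed.

Lemma induced_sym (e : rel V) (S : {set V}) : symmetric e -> symmetric (induced e S).
Proof.
move=> se x y; rewrite /induced /= se.
by case: (x \in S); case: (y \in S); rewrite ?andbF ?andbT.
Qed.

Lemma diff_sym (e : rel V) (S : {set V}) : symmetric e -> symmetric (diff_adj e S).
Proof. by move=> se x y; rewrite /diff_adj /= se (andbC (y \in S)). Qed.

Lemma conn_in (e : rel V) (S : {set V}) x y :
  connect (induced e S) x y -> x \in S -> y \in S.
Proof.
move=> c xS; apply: (connect_closed (X := mem S)) c xS _.
by move=> u w _ /and3P [].
Qed.

Lemma path_all (e : rel V) (S : {set V}) x p :
  path (induced e S) x p -> all (mem S) p.
Proof.
elim: p x => [|z p IH] x //= /andP [/and3P [_ _ zS] pth].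
by rewrite zS (IH z pth).
Qed.

Lemma comp_eq (e : rel V) c x : symmetric e -> connect e c x ->
  [set y | connect e x y] = [set y | connect e c y].
Proof.
move=> se cx; apply/setP => y; rewrite !inE; apply/idP/idP.
  exact: connect_trans.
by apply: connect_trans; rewrite (sym_connect_sym se).
Qed.

End Gen.

Section Tree.
Variable V : finType.
Variable adj : rel V.
Variable root : V.
Hypothesis sym : symmetric adj.
Hypothesis irr : irreflexive adj.
Hypothesis conn : forall x y : V, connect adj x y.
Hypothesis acyc : acyclic adj.

Definition A (x : V) : {set V} :=
  [set y | (y != x) && connect (induced adj (~: [set x])) root y].
Definition K (c : V) : {set V} := c |: A c.
Definition ch (v : V) : {set V} := [set c | adj v c && (c \notin A v)].
Definition Qs (B : {set V}) : {set V} := [set y | [forall c, (c \in B) ==> (y \in K c)]].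
Definition sz x := #|~: A x|.

Lemma notA x : x \notin A x.
Proof. by rewrite inE eqxx. Qed.

Lemma A_ext c a b : a \in A c -> adj a b -> b != c -> b \in A c.
Proof.
rewrite !inE => /andP [ac ca] ab bc; rewrite bc /=.
apply: connect_trans ca (connect1 _).
by rewrite /induced /= ab !inE ac bc.
Qed.

Lemma root_A c : c != root -> root \in A c.
Proof. by rewrite inE eq_sym => ->; exact: connect0. Qed.

Lemma root_K c : root \in K c.
Proof.
rewrite /K in_setU1; case: eqP => [//|/eqP ne] /=.
by apply: root_A; rewrite eq_sym.
Qed.

Lemma A_root y : y \in A root = false.
Proof.
apply/negP; rewrite inE => /andP [yr cy].
have : pred1 root y.
  apply: (connect_closed (X := pred1 root)) cy (eqxx _) _.
  by move=> u w /eqP -> ; rewrite /induced /= !inE eqxx /= andbF.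
by rewrite /= (negbTE yr).
Qed.

Lemma K0 v c : c \in ch v -> v \in A c.
Proof.
rewrite inE => /andP [vc cA].
have vnc : v != c by apply: (contraTneq _ vc) => ->; rewrite irr.
case: (eqVneq v root) => [vr | vr].
  by rewrite vr; apply: root_A; rewrite -vr eq_sym.
have rA : root \in A v by apply: root_A.
have [a [b [ca aA bA ab]]] := exit (conn root v) rA (notA v).
have bv : b = v.
  by apply/eqP; apply: (contraNT _ bA) => bv; exact: A_ext aA ab bv.
subst b.
rewrite inE vnc /=.
have ac : a != c by apply: (contraNneq _ cA) => <-.
apply: connect_trans (connect1 (_ : induced adj (~:[set c]) a v)); last first.
  by rewrite /induced /= ab !inE ac vnc.
apply: connect_sub ca => x y /and3P [xy xA yA]; apply: connect1.
rewrite /induced /= xy !inE /=.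
by apply/andP; split; apply: (contraNneq _ cA) => <-.
Qed.

Lemma K2 v c z : c \in ch v -> adj c z -> z \in A c -> z = v.
Proof.
move=> cch cz zA; have vA := K0 cch.
move: (cch); rewrite inE => /andP [vc _].
apply/eqP; apply/negP => /negP zv.
have czv : connect (induced adj (~:[set c])) z v.
  move: (zA) (vA); rewrite !inE => /andP [_ rz] /andP [_ rv].
  apply: connect_trans rv; by rewrite (sym_connect_sym (induced_sym _ sym)).
case/connectP: czv => p pth.
case: (shortenP pth) => p' pth' up' _ lp'.
have zc : z != c by move: zA; rewrite inE => /andP [].
have h1 : path adj c (z :: p').
  rewrite /= cz /=; apply: sub_path pth' => x y /and3P [] //.
have h2 : uniq (c :: z :: p').
  rewrite cons_uniq up' andbT in_cons negb_or eq_sym zc /=.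
  apply/negP => cp; have := allP (path_all pth') c cp.
  by rewrite /= !inE eqxx.
have h3 : 1 < size (z :: p').
  by case: p' pth' up' lp' {h1 h2} => [/= _ _ lp'|//]; rewrite lp' eqxx in zv.
have := @acyc c (z :: p') h1 h2 h3.
by rewrite /= -lp' vc.
Qed.

Lemma K1 v c : c \in ch v -> A v \subset A c.
Proof.
move=> cch; have vA := K0 cch; move: (cch); rewrite inE => /andP [vc cAv].
apply/subsetP => y; case: (eqVneq v root) => [-> | vr]; first by rewrite A_root.
rewrite inE => /andP [yv ry].
have cr : c != root by apply: (contraNneq _ cAv) => ->; exact: root_A.
apply: (connect_closed (X := mem (A c))) ry (root_A cr) _.
move=> u w uA /and3P [uw un wn] /=.
apply: (A_ext uA uw); apply/eqP => wc; subst w.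
have cu : adj c u by rewrite sym.
have := K2 cch cu uA; move: un; rewrite !inE => /eqP un.
by move=> uv; apply: un.
Qed.

Lemma sz_lt v c : c \in ch v -> sz c < sz v.
Proof.
move=> cch; apply: proper_card; apply/properP; split.
  by rewrite setCS; exact: K1.
exists v; first by rewrite inE notA.
by rewrite inE negbK; exact: K0.
Qed.


Lemma QK B y c : y \in Qs B -> c \in B -> y \in K c.
Proof. by rewrite inE => /forallP /(_ c) /implyP. Qed.

Lemma notQ B y : y \notin Qs B -> exists2 c, c \in B & y \notin K c.
Proof.
rewrite inE => /forallPn [c]; rewrite negb_imply => /andP [cB yK].
by exists c.
Qed.

Lemma root_Q B : root \in Qs B.
Proof. by rewrite inE; apply/forallP => c; apply/implyP => _; exact: root_K. Qed.

Lemma exitQ B a b : a \in Qs B -> b \notin Qs B -> adj a b -> a \in B /\ b \notin K a.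
Proof.
move=> aQ /notQ [c cB bK] ab.
have := QK aQ cB; rewrite /K in_setU1 => /orP [/eqP ac | aA].
  by subst a.
exfalso; move: bK; rewrite /K in_setU1 negb_or => /andP [bc bA].
by rewrite (A_ext aA ab bc) in bA.
Qed.

Lemma Q_conn B y : y \in Qs B -> connect (induced adj (Qs B)) root y.
Proof.
move=> yQ; set P := [set z | connect (induced adj (Qs B)) root z].
apply/idPn => yP.
have yP' : y \in ~: P by rewrite !inE.
have rP : root \notin ~: P by rewrite !inE negbK connect0.
have [a [b [ya aP bP ab]]] := exit (conn y root) yP' rP.
move: bP; rewrite !inE negbK => rb.
have bQ : b \in Qs B := conn_in rb (root_Q B).
have aQ : a \notin Qs B.
  apply/negP => aQ; move: aP; rewrite !inE; apply/negP; rewrite negbK.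
  apply: connect_trans rb (connect1 _); by rewrite /induced /= sym ab bQ aQ.
have ba : adj b a by rewrite sym.
have [bB aK] := exitQ bQ aQ ba.
have yK := QK yQ bB.
have yb : y != b by apply/eqP => yb; subst y; rewrite !inE rb in yP'.
have yA : y \in A b by move: yK; rewrite /K in_setU1 (negbTE yb).
have : a \in A b.
  apply: (connect_closed (X := mem (A b))) ya yA _.
  move=> u w uA /and3P [uw _ wn] /=; apply: (A_ext uA uw).
  by apply/eqP => wb; subst w; rewrite !inE rb in wn.
by move=> aA; rewrite /K in_setU1 aA orbT in aK.
Qed.

Lemma Q_subtree B : subtree_set adj (Qs B).
Proof.
split; first by apply/set0Pn; exists root; exact: root_Q.
move=> x y xQ yQ; apply: connect_trans (Q_conn yQ).
by rewrite (sym_connect_sym (induced_sym _ sym)); exact: Q_conn.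
Qed.

Lemma C1 B u : u \notin Qs B -> exists2 c, c \in B & connect (diff_adj adj (Qs B)) c u.
Proof.
move=> uQ.
have uP : u \in ~: Qs B by rewrite inE.
have rP : root \notin ~: Qs B by rewrite inE negbK root_Q.
have [a [b [ua aP bP ab]]] := exit (conn u root) uP rP.
move: aP bP; rewrite !in_setC negbK => aQ bQ.
have ba : adj b a by rewrite sym.
have [bB _] := exitQ bQ aQ ba.
exists b => //.
rewrite (sym_connect_sym (diff_sym _ sym)).
apply: connect_trans (connect1 (_ : diff_adj adj (Qs B) a b)); last first.
  by rewrite /diff_adj /= ab (negbTE aQ).
apply: connect_sub ua => x y /and3P [xy xQ _]; apply: connect1.
by move: xQ; rewrite /diff_adj /= xy inE => /negbTE ->.
Qed.

Lemma comps_desc B X : X \in diff_comps adj (Qs B) ->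
  exists2 c, c \in B & X = diff_comp adj (Qs B) c.
Proof.
case/imsetP => x; rewrite inE => /existsP [y dxy] ->.
have ds := diff_sym (Qs B) sym.
case xQ: (x \in Qs B).
  have yQ : y \notin Qs B by move: dxy; rewrite /diff_adj /= xQ /= => /andP [].
  have [c cB cy] := C1 yQ; exists c => //.
  apply: comp_eq => //; apply: connect_trans cy (connect1 _).
  by rewrite ds.
have [c cB cx] := C1 (negbT xQ); exists c => //.
exact: comp_eq.
Qed.

Lemma comp_sub v (B : {set V}) c : B \subset ch v -> c \in B ->
  diff_comp adj (Qs B) c \subset ~: A c.
Proof.
move=> hB cB; have cch : c \in ch v := subsetP hB c cB.
move: (cch); rewrite inE => /andP [vc _].
apply/subsetP => y; rewrite inE => cy.
apply: (connect_closed (X := mem (~: A c))) cy _ _; first by rewrite /= inE notA.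
move=> u w /=; rewrite !in_setC => uA /andP [uw uwQ]; apply/negP => wA.
case: (eqVneq u c) => [uc | uc].
  subst u; have wv := K2 cch uw wA; subst w.
  have cQ : c \in Qs B.
    rewrite inE; apply/forallP => c'; apply/implyP => c'B; rewrite /K in_setU1.
    case: (eqVneq c c') => [->|cc'] //=.
    exact: (A_ext (K0 (subsetP hB c' c'B)) vc cc').
  have vQ : v \in Qs B.
    rewrite inE; apply/forallP => c'; apply/implyP => c'B.
    by rewrite /K in_setU1 K0 ?orbT // (subsetP hB).
  by rewrite cQ vQ in uwQ.
have wu : adj w u by rewrite sym.
by rewrite (A_ext wA wu uc) in uA.
Qed.


Lemma rem_step B c : ~: Qs (c |: B) \subset ~: Qs B :|: (~: A c :\ c).
Proof.
apply/subsetP => y; rewrite in_setC => /notQ [c' c'B yK].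
move: c'B; rewrite in_setU1 => /orP [/eqP cc | c'B].
  subst c'; move: yK; rewrite /K in_setU1 negb_or => /andP [yc yA].
  rewrite in_setU !inE yc /=; move: yA; rewrite inE yc /= => ->; by rewrite orbT.
rewrite in_setU in_setC; apply/orP; left; apply/negP => yQ.
by rewrite (QK yQ c'B) in yK.
Qed.

Lemma Q0 : Qs set0 = setT.
Proof. by apply/setP => y; rewrite !inE; apply/forallP => c; rewrite inE. Qed.

Lemma sz_root : sz root = #|V|.
Proof.
rewrite /sz -cardsT; apply: eq_card => y; by rewrite in_setC A_root inE.
Qed.

Lemma rem_full v : (~: A v :\ v) :\: ch v \subset ~: Qs (ch v).
Proof.
apply/subsetP => y; rewrite in_setD in_setD1 in_setC => /andP [ych /andP [yv yAv]].
rewrite in_setC.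
pose P := ((~: A v) :\ v)%SET.
have yP : y \in P by rewrite /P in_setD1 in_setC yv yAv.
have vP : v \notin P by rewrite /P in_setD1 eqxx.
have [a [b [ya aP bP ab]]] := exit (conn y v) yP vP.
move: (aP); rewrite /P in_setD1 in_setC => /andP [av aA].
have bv : b = v.
  apply/eqP; apply: contraNT bP => bv; rewrite /P in_setD1 in_setC bv /=.
  apply/negP => bA; have ba : adj b a by rewrite sym.
  by rewrite (A_ext bA ba av) in aA.
subst b.
have ach : a \in ch v by rewrite inE sym ab aA.
apply/negP => yQ; have := QK yQ ach; rewrite /K in_setU1 => /orP [/eqP ya' | yA].
  by subst a; rewrite ach in ych.
have [a2 [b2 [_ a2A b2A]]] := exit ya yA (notA a).
move=> /and3P [a2b2 a2P _].
have b2a : b2 = a.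
  apply/eqP; apply: contraNT b2A => b2a; exact: A_ext a2A a2b2 b2a.
subst b2.
have aa2 : adj a a2 by rewrite sym.
have := K2 ach aa2 a2A => a2v; subst a2.
by rewrite /P in_setD1 eqxx in a2P.
Qed.

End Tree.

From mathcomp Require Import lra.
Unset Implicit Arguments.
Local Open Scope ring_scope.

Theorem lemma7p1 (R : realType) (D : nat) (lam : R)
  (V : finType) (adj : rel V) (root : V) :
  (1 <= D)%N -> 0 <= lam -> lam < 1 ->
  is_tree adj -> maxdeg_le adj D ->
  exists S : {set V},
    [/\ subtree_set adj S /\ root \in S,
        (1 - 2 * lam) * #|V|%:R <= #|S|%:R,
        #|S|%:R <= (1 - lam) * #|V|%:R + 2 * D%:R,
        (#|diff_comps adj S| <= D)%N &
        forall C, C \in diff_comps adj S -> #|C|%:R <= lam * #|V|%:R].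
Proof.
move=> D1 lam0 lam1 [[sym irr] [n0 [conn acyc]]] deg.
set n := #|V|.
have N0 : (0 : R) < n%:R by rewrite ltr0n.
have D1R : (1 : R) <= D%:R by rewrite ler1n.
pose L := lam * n%:R.
have L0 : 0 <= L by rewrite mulr_ge0 // ler0n.
have LN : L < n%:R by rewrite /L; nra.
pose Pm := fun m : nat => [exists x, (sz adj root x == m) && (L < m%:R)].
have exPm : exists m, Pm m.
  by exists n; rewrite /Pm; apply/existsP; exists root; rewrite sz_root eqxx LN.
case: (ex_minnP exPm) => m /existsP [v /andP [/eqP szv Lm]] minm.
have chL : forall c, c \in ch adj root v -> (sz adj root c)%:R <= L.
  move=> c cch; rewrite leNgt; apply/negP => Lc.
  have : Pm (sz adj root c) by rewrite /Pm; apply/existsP; exists c; rewrite eqxx Lc.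
  move/minm; rewrite -szv leqNgt; apply/negP/negPn.
  exact: sz_lt sym irr conn acyc _ _ cch.
have chD : (#|ch adj root v| <= D)%N.
  apply: leq_trans (deg v); apply: subset_leq_card; apply/subsetP => c.
  by rewrite !inE => /andP [].
pose cs := enum (ch adj root v).
pose k := size cs.
pose Bj j : {set V} := [set x in take j cs].
pose f j := #|~: Qs adj root (Bj j)|.
have hBj : forall j, Bj j \subset ch adj root v.
  by move=> j; apply/subsetP => x; rewrite inE => /mem_take; rewrite mem_enum.
have f0 : f 0%N = 0%N.
  rewrite /f; have -> : Bj 0%N = set0 by apply/setP => x; rewrite /Bj !inE take0.
  by rewrite Q0 setCT cards0.
have fS : forall j, (j < k)%N -> (f j.+1)%:R <= (f j)%:R + L.
  move=> j jk; set c := nth v cs j; rewrite /f.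
  have cch : c \in ch adj root v by rewrite -mem_enum; apply: mem_nth.
  have -> : Bj j.+1 = c |: Bj j.
    by apply/setP => x; rewrite /Bj !inE (take_nth v) // mem_rcons in_cons.
  apply: le_trans (_ : (f j + sz adj root c)%:R <= _); last by rewrite natrD lerD2l chL.
  rewrite ler_nat /f; apply: leq_trans (subset_leq_card (rem_step _ _ _ c)) _.
  apply: leq_trans (leq_card_setU _ _).1 _; rewrite leq_add2l.
  by apply: subset_leq_card; apply: subD1set.
have fk : (sz adj root v <= 1 + f k + D)%N.
  rewrite /f; have -> : Bj k = ch adj root v by apply/setP => x; rewrite /Bj inE take_size mem_enum.
  apply: leq_trans (_ : #|[set v] :|: ch adj root v :|: ~: Qs adj root (ch adj root v)| <= _)%N.
    apply: subset_leq_card; apply/subsetP => y yA.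
    case: (eqVneq y v) => [->|yv]; first by rewrite !inE eqxx.
    case ych: (y \in ch adj root v); first by rewrite !in_setU ych orbT.
    rewrite in_setU; apply/orP; right.
    apply: (subsetP (rem_full root sym irr conn acyc v)).
    by rewrite in_setD ych in_setD1 yv yA.
  apply: leq_trans (leq_card_setU _ _).1 _.
  rewrite [(1 + _ + D)%N]addnAC leq_add2r.
  apply: leq_trans (leq_card_setU _ _).1 _.
  by rewrite cards1 leq_add2l.
pose Pj := fun j => (j <= k)%N && (L - 2 * D%:R <= (f j)%:R).
have exPj : exists j, Pj j.
  exists k; rewrite /Pj leqnn /=.
  have : (sz adj root v)%:R <= (1 + f k + D)%:R :> R by rewrite ler_nat.
  rewrite szv !natrD; lra.
case: (ex_minnP exPj) => j /andP [jk Lf] minj.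
have hB := hBj j.
exists (Qs adj root (Bj j)).
have cardQ : (#|Qs adj root (Bj j)|%:R : R) = n%:R - (f j)%:R.
  by rewrite /f /n -(cardsC (Qs adj root (Bj j))) natrD addrK.
have f2 : (f j)%:R <= 2 * L.
  case: j jk Lf minj {hB cardQ} => [|j'] jk Lf minj.
    by rewrite f0; lra.
  have nP : ~~ Pj j'.
    by apply/negP => /minj; rewrite ltnn.
  have j'k : (j' < k)%N by [].
  move: nP; rewrite /Pj (ltnW j'k) /= -ltNge => lt.
  have := fS j' j'k; lra.
split.
- split; [exact: Q_subtree | exact: root_Q].
- by rewrite cardQ; rewrite /L in f2; nra.
- by rewrite cardQ; rewrite /L in Lf; nra.
- apply: leq_trans chD; apply: leq_trans (subset_leq_card hB).
  apply: leq_trans (leq_imset_card (diff_comp adj (Qs adj root (Bj j))) (Bj j)).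
  apply: subset_leq_card; apply/subsetP => X /(comps_desc sym conn) [c cB ->].
  by apply: imset_f.
- move=> X /(comps_desc sym conn) [c cB ->].
  apply: le_trans (chL c (subsetP hB c cB)).
  rewrite ler_nat; apply: subset_leq_card.
  exact: comp_sub sym irr conn acyc v _ _ hB cB.
Qed.
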